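(* Suppose $|\Omega| = |A| = 2$. Then ambiguous communication does not benefit the sender, i.e. $V_{\mathrm{amb}} \le V_{\mathrm{stat}}$.
   Context: Setting: $\Omega$ is a finite set of states, $A$ a finite set of receiver actions. Sender and receiver share a set of priors $P \subseteq \Delta(\Omega)$, nonempty, closed and convex; both have maxmin expected utility preferences. Payoffs are $u_s, u_r : A \times \Omega \to \mathbb{R}$ (arbitrary). A statistical experiment with finite message set $M$ is a map $\sigma: \Omega \to \Delta(M)$, written $\sigma(m\mid\omega)$. A receiver strategy is $\tau: M \to \Delta(A)$, written $\tau(a\mid m)$. For $p \in P$ and $i \in \{s,r\}$, $u_i(p,\sigma,\tau) = \sum_{\omega,m,a} p(\omega)\sigma(m\mid\omega)\tau(a\mid m)u_i(a,\omega)$ and $u_i(\sigma,\tau) = \min_{p\in P} u_i(p,\sigma,\tau)$. An ambiguous experiment is a nonempty closed convex set $\Sigma$ of statistical experiments with a common finite message set $M$; $U_i(\Sigma,\tau) = \min_{\sigma \in \Sigma} u_i(\sigma,\tau)$. Best responses: $BR(\sigma) = \arg\max_{\tau} u_r(\sigma,\tau)$ and $BR(\Sigma) = \arg\max_{\tau} U_r(\Sigma,\tau)$, maximizing over all strategies $\tau: M \to \Delta(A)$. The sender's value with statistical experiments is $V_{\mathrm{stat}} = \sup\{u_s(\sigma,\tau) : M \text{ finite}, \sigma:\Omega\to\Delta(M), \tau \in BR(\sigma)\}$, and with ambiguous experiments is $V_{\mathrm{amb}} = \sup\{U_s(\Sigma,\tau) : M \text{ finite}, \Sigma \text{ ambiguous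 experiment with message set } M, \tau \in BR(\Sigma)\}$ (the sender selects both the experiment and the receiver's best response). Ambiguous communication benefits the sender if $V_{\mathrm{amb}} > V_{\mathrm{stat}}$. *)

(* Defs.v *)
From HB Require Import structures.
From mathcomp Require Import all_boot all_order all_algebra.
From mathcomp Require Import all_classical all_reals all_analysis.
Import numFieldNormedType.Exports.
Import Order.TTheory GRing.Theory Num.Theory.

Set Implicit Arguments.
Unset Strict Implicit.
Unset Printing Implicit Defensive.

Local Open Scope classical_set_scope.
Local Open Scope ring_scope.

Definition is_dist {R : realType} {X : finType} (p : X -> R) : Prop :=
  (forall x, 0 <= p x) /\ \sum_(x : X) p x = 1.

Definition is_experiment {R : realType} {Om M : finType} (sigma : Om -> M -> R) : Prop :=
  forall w, is_dist (sigma w).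

Definition is_strategy {R : realType} {M A : finType} (tau : M -> A -> R) : Prop :=
  forall m, is_dist (tau m).

Definition is_prior_set {R : realType} {Om : finType} (P : set (Om -> R)) : Prop :=
  [/\ P !=set0, (forall p, P p -> is_dist p),
      @closed {ptws Om -> R} P &
      (forall p q (t : R), P p -> P q -> 0 <= t <= 1 ->
          P (fun w => t * p w + (1 - t) * q w))].

Definition is_amb_experiment {R : realType} {Om M : finType}
    (Sig : set (Om -> M -> R)) : Prop :=
  [/\ Sig !=set0, (forall s, Sig s -> is_experiment s),
      @closed {ptws Om -> {ptws M -> R}} Sig &
      (forall s s' (t : R), Sig s -> Sig s' -> 0 <= t <= 1 ->
          Sig (fun w m => t * s w m + (1 - t) * s' w m))].

Definition upay {R : realType} {Om M A : finType} (u : A -> Om -> R)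
    (p : Om -> R) (sigma : Om -> M -> R) (tau : M -> A -> R) : R :=
  \sum_(w : Om) \sum_(m : M) \sum_(a : A) p w * sigma w m * tau m a * u a w.

(* u_i(sigma, tau) = min_{p in P} u_i(p, sigma, tau)  (inf = min, P compact) *)
Definition mpay {R : realType} {Om M A : finType} (P : set (Om -> R))
    (u : A -> Om -> R) (sigma : Om -> M -> R) (tau : M -> A -> R) : R :=
  inf [set upay u p sigma tau | p in P].

Definition Upay {R : realType} {Om M A : finType} (P : set (Om -> R))
    (u : A -> Om -> R) (Sig : set (Om -> M -> R)) (tau : M -> A -> R) : R :=
  inf [set mpay P u sigma tau | sigma in Sig].

Definition BR_stat {R : realType} {Om M A : finType} (P : set (Om -> R))
    (ur : A -> Om -> R) (sigma : Om -> M -> R) (tau : M -> A -> R) : Prop :=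
  is_strategy tau /\
  forall tau' : M -> A -> R, is_strategy tau' -> mpay P ur sigma tau' <= mpay P ur sigma tau.

Definition BR_amb {R : realType} {Om M A : finType} (P : set (Om -> R))
    (ur : A -> Om -> R) (Sig : set (Om -> M -> R)) (tau : M -> A -> R) : Prop :=
  is_strategy tau /\
  forall tau' : M -> A -> R, is_strategy tau' -> Upay P ur Sig tau' <= Upay P ur Sig tau.

Definition V_stat {R : realType} {Om A : finType} (P : set (Om -> R))
    (us ur : A -> Om -> R) : \bar R :=
  ereal_sup [set x : \bar R | exists (M : finType) (sigma : Om -> M -> R)
      (tau : M -> A -> R),
      [/\ is_experiment sigma, BR_stat P ur sigma tau &
          x = (mpay P us sigma tau)%:E]].

Definition V_amb {R : realType} {Om A : finType} (P : set (Om -> R))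
    (us ur : A -> Om -> R) : \bar R :=
  ereal_sup [set x : \bar R | exists (M : finType) (Sig : set (Om -> M -> R))
      (tau : M -> A -> R),
      [/\ is_amb_experiment Sig, BR_amb P ur Sig tau &
          x = (Upay P us Sig tau)%:E]].

(* Main.v *)
Require Import Defs.
From HB Require Import structures.
From mathcomp Require Import all_boot all_order all_algebra.
From mathcomp Require Import all_classical all_reals all_analysis.
From mathcomp Require Import ring lra.
Import numFieldNormedType.Exports.
Import Order.TTheory GRing.Theory Num.Theory.
Local Open Scope classical_set_scope.
Local Open Scope ring_scope.
Set Implicit Arguments.
Unset Strict Implicit.
Unset Printing Implicit Defensive.
Lemma card2P (T : finType) : #|T| = 2%N ->
  exists x y : T, x != y /\ forall z, z = x \/ z = y.
Proof.
rewrite cardE => H.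
have U := enum_uniq T.
case E: (enum T) H U => [|x [|y [|]]] //= _.
rewrite inE andbT => xy.
exists x, y; split => // z.
have : z \in enum T by rewrite mem_enum.
by rewrite E !inE => /orP [/eqP->|/eqP->]; [left|right].
Qed.

Lemma sum2 (T : finType) (V : nmodType) (x y : T) : x != y ->
  (forall z, z = x \/ z = y) -> forall f : T -> V, \sum_t f t = f x + f y.
Proof.
move=> xy Hz f.
rewrite (bigD1 x) //= (bigD1 y) /=; last by rewrite eq_sym.
rewrite big1 ?addr0 // => t /andP [tx ty].
by case: (Hz t) => E; rewrite E eqxx in tx ty.
Qed.
Section Top.
Import ArrowAsProduct.
Variable R : realType.

Lemma cube_compact (X : finType) :
  compact [set f : {ptws X -> R} | forall x, `[0, 1]%classic (f x)].
Proof. by have := (@tychonoff X (fun=> R) (fun=> `[0,1]%classic) (fun _ => @segment_compact R 0 1)). Qed.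

Lemma cube2_compact (X Y : finType) :
  compact [set f : {ptws X -> {ptws Y -> R}} |
     forall x, [set g : {ptws Y -> R} | forall y, `[0, 1]%classic (g y)] (f x)].
Proof. by have := (@tychonoff X (fun=> {ptws Y -> R}) _ (fun _ => @cube_compact Y)). Qed.

Lemma eval_cont (X : finType) (x : X) : continuous (fun f : {ptws X -> R} => f x).
Proof. exact: (@proj_continuous X (fun _ => R) x). Qed.

Lemma eval2_cont (X Y : finType) (x : X) (y : Y) :
  continuous (fun f : {ptws X -> {ptws Y -> R}} => f x y).
Proof.
move=> f; apply: (@continuous_comp _ _ _ (fun f : {ptws X -> {ptws Y -> R}} => f x)
   (fun g : {ptws Y -> R} => g y)).
  exact: (@proj_continuous X (fun _ => {ptws Y -> R}) x).
exact: eval_cont.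
Qed.

Lemma sum_cont (T : topologicalType) (I : finType) (F : I -> T -> R) :
  (forall i, continuous (F i)) -> continuous (fun t => \sum_i F i t).
Proof.
move=> Fc t.
rewrite -fct_sumE.
elim/big_ind: _ => [|f g cf cg|i _]; [exact: cst_continuous| exact: continuousD | exact: Fc].
Qed.

Lemma mulc_cont (T : topologicalType) (c : R) (F : T -> R) :
  continuous F -> continuous (fun t => c * F t).
Proof.
move=> Fc t; apply: (@continuousM R T (fun _ => c) F t).
  exact: cst_continuous.
exact: Fc.
Qed.
End Top.
Lemma inf_eqc (R : realType) (E : set R) (c : R) :
  E c -> (forall x, E x -> c <= x) -> inf E = c.
Proof.
move=> Ec lb; apply/le_anti/andP; split.
  by apply: ge_inf => //; exists c.
by apply: lb_le_inf => //; exists c.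
Qed.

Lemma dist_le1 (R : realType) (X : finType) (p : X -> R) x : is_dist p -> p x <= 1.
Proof.
move=> [p0 <-]; rewrite (bigD1 x) //= lerDl; exact: sumr_ge0.
Qed.
Lemma oneD (R : realType) (a0 a1 b0 b1 v : R) :
  (forall th : R, 0 <= th <= 1 ->
     Num.min ((1 - th) * a0 + th * a1) ((1 - th) * b0 + th * b1) <= v) ->
  exists nu : R, [/\ 0 <= nu <= 1, nu * a0 + (1 - nu) * b0 <= v &
                      nu * a1 + (1 - nu) * b1 <= v].
Proof.
have gen : forall a0 a1 b0 b1 : R,
  (forall th : R, 0 <= th <= 1 ->
     Num.min ((1 - th) * a0 + th * a1) ((1 - th) * b0 + th * b1) <= v) ->
  a0 <= v -> v < b0 -> b1 <= v -> v < a1 ->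
  exists nu : R, [/\ 0 <= nu <= 1, nu * a0 + (1 - nu) * b0 <= v &
                      nu * a1 + (1 - nu) * b1 <= v].
  move=> c0 c1 d0 d1 H h1 h2 h3 h4.
  set S := d0 - c0 + (c1 - d1).
  have S0 : 0 < S by rewrite /S; lra.
  have Sn : S != 0 by rewrite gt_eqF.
  set th := (d0 - c0) / S.
  set nu := (d0 - d1) / S.
  have th01 : 0 <= th <= 1.
    apply/andP; split; first by rewrite divr_ge0 //; lra.
    by rewrite ler_pdivrMr // mul1r /S; lra.
  have nu01 : 0 <= nu <= 1.
    apply/andP; split; first by rewrite divr_ge0 //; lra.
    by rewrite ler_pdivrMr // mul1r /S; lra.
  have e2 : (1 - th) * c0 + th * c1 = (1 - th) * d0 + th * d1.
    rewrite /th /S; field; done.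
  have e1 : nu * c0 + (1 - nu) * d0 = (1 - th) * c0 + th * c1.
    rewrite /th /nu /S; field; done.
  have e3 : nu * c1 + (1 - nu) * d1 = (1 - th) * c0 + th * c1.
    rewrite /th /nu /S; field; done.
  have := H th th01; rewrite -e2 minxx => hv.
  by exists nu; split => //; rewrite ?e1 ?e3.
move=> H.
have h0 : Num.min a0 b0 <= v.
  by have := H 0; rewrite lexx ler01 subr0 !mul1r !mul0r !addr0; apply.
have h1 : Num.min a1 b1 <= v.
  by have := H 1; rewrite lexx ler01 subrr !mul0r !add0r !mul1r; apply.
move: h0 h1; rewrite !ge_min => /orP[ha0|hb0] /orP[ha1|hb1].
- by exists 1; split; rewrite ?lexx ?ler01 ?subrr ?mul1r ?mul0r ?addr0.
- have [hb0|hb0] := leP b0 v.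
    by exists 0; split; rewrite ?lexx ?ler01 ?subr0 ?mul1r ?mul0r ?add0r.
  have [ha1|ha1] := leP a1 v.
    by exists 1; split; rewrite ?lexx ?ler01 ?subrr ?mul1r ?mul0r ?addr0.
  exact: gen.
- have [ha0|ha0] := leP a0 v.
    by exists 1; split; rewrite ?lexx ?ler01 ?subrr ?mul1r ?mul0r ?addr0.
  have [hb1|hb1] := leP b1 v.
    by exists 0; split; rewrite ?lexx ?ler01 ?subr0 ?mul1r ?mul0r ?add0r.
  have [nu [nu01 e1 e2]] : exists nu : R, [/\ 0 <= nu <= 1, nu * b0 + (1 - nu) * a0 <= v &
                      nu * b1 + (1 - nu) * a1 <= v].
    apply: gen => // th hth; rewrite minC; exact: H.
  exists (1 - nu); split.
  - by move: nu01 => /andP [? ?]; apply/andP; split; lra.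
  - have -> : (1 - nu) * a0 + (1 - (1 - nu)) * b0 = nu * b0 + (1 - nu) * a0 by ring.
    done.
  - have -> : (1 - nu) * a1 + (1 - (1 - nu)) * b1 = nu * b1 + (1 - nu) * a1 by ring.
    done.
- by exists 0; split; rewrite ?lexx ?ler01 ?subr0 ?mul1r ?mul0r ?add0r.
Qed.
Lemma eps_ex (R : realType) (D X : R) : 0 < D ->
  exists e : R, [/\ 0 < e, e <= 1/2 & - D < e * X].
Proof.
move=> D0; have [X0|X0] := leP 0 X.
  exists (1/2); split; [lra|lra|].
  by apply: (lt_le_trans (y := 0)); [rewrite oppr_lt0 | apply: mulr_ge0 => //; lra].
have den : 0 < 2 * D - 2 * X by lra.
exists (D / (2 * D - 2 * X)); split.
- by rewrite divr_gt0.
- by rewrite ler_pdivrMr //; lra.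
- rewrite mulrAC ltr_pdivlMr //; nra.
Qed.
Section Main.
Variables (R : realType) (Om A : finType) (P : set (Om -> R)).
Variables (w0 w1 : Om) (a0 a1 : A).
Hypothesis w01 : w0 != w1.
Hypothesis wP : forall w, w = w0 \/ w = w1.
Hypothesis a01 : a0 != a1.
Hypothesis aP : forall a, a = a0 \/ a = a1.
Hypothesis HP : is_prior_set P.
Variables (pl ph : Om -> R).
Hypotheses (Ppl : P pl) (Pph : P ph).
Hypothesis plmin : forall p, P p -> pl w1 <= p w1.
Hypothesis phmax : forall p, P p -> p w1 <= ph w1.

Definition zz (M : finType) (s : Om -> M -> R) (t : M -> A -> R) : Om -> R :=
  fun w => \sum_m s w m * t m a1.

Definition L (u : A -> Om -> R) (p : Om -> R) (z : Om -> R) : R :=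
  \sum_w p w * (u a0 w + z w * (u a1 w - u a0 w)).

Definition G u z := Num.min (L u pl z) (L u ph z).

Definition cst (c : R) : Om -> R := fun _ => c.

Lemma strat0 (M : finType) (t : M -> A -> R) m : is_strategy t -> t m a0 = 1 - t m a1.
Proof. by move=> /(_ m) [_]; rewrite (sum2 a01 aP) => <-; rewrite addrK. Qed.

Lemma upayE (M : finType) u p (s : Om -> M -> R) (t : M -> A -> R) :
  is_experiment s -> is_strategy t -> upay u p s t = L u p (zz s t).
Proof.
move=> es et; rewrite /upay /L; apply: eq_bigr => w _.
transitivity (\sum_m (p w * (s w m * u a0 w + s w m * t m a1 * (u a1 w - u a0 w)))).
  apply: eq_bigr => m _; rewrite (sum2 a01 aP) (strat0 m et); ring.
rewrite -mulr_sumr big_split /= -!mulr_suml.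
by case: (es w) => _ ->; rewrite mul1r.
Qed.

Lemma L_aff u p z (a b : R) :
  L u p (fun w => a + b * z w) = (1 - a - b) * L u p (cst 0) + a * L u p (cst 1) + b * L u p z.
Proof. rewrite /L /cst !(sum2 w01 wP); ring. Qed.

Lemma L_cst u p (a : R) :
  L u p (cst a) = (1 - a) * L u p (cst 0) + a * L u p (cst 1).
Proof. rewrite /L /cst !(sum2 w01 wP); ring. Qed.

Lemma L_mix u p z1 z2 (l : R) :
  L u p (fun w => l * z1 w + (1 - l) * z2 w) = l * L u p z1 + (1 - l) * L u p z2.
Proof. rewrite /L !(sum2 w01 wP); ring. Qed.

Lemma prior_dist p : P p -> is_dist p.
Proof. by case: HP => _ H _ _; apply: H. Qed.

Lemma L_ge_G u p z : P p -> G u z <= L u p z.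
Proof.
move=> Pp; rewrite /G /L !(sum2 w01 wP).
have [_ s1] := prior_dist Pp.
have [_ s2] := prior_dist Ppl.
have [_ s3] := prior_dist Pph.
rewrite (sum2 w01 wP) in s1; rewrite (sum2 w01 wP) in s2; rewrite (sum2 w01 wP) in s3.
have h1 := plmin Pp; have h2 := phmax Pp.
set c0 := u a0 w0 + z w0 * (u a1 w0 - u a0 w0).
set c1 := u a0 w1 + z w1 * (u a1 w1 - u a0 w1).
have e : forall q : Om -> R, q w0 + q w1 = 1 -> q w0 * c0 + q w1 * c1 = c0 + q w1 * (c1 - c0).
  move=> q hq; have -> : q w0 = 1 - q w1 by rewrite -hq addrK.
  ring.
rewrite !e // ge_min.
have [B0|B0] := leP 0 (c1 - c0).
  by apply/orP; left; rewrite lerD2l ler_wpM2r.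
by apply/orP; right; rewrite lerD2l ler_wnM2r // ltW.
Qed.

Lemma mpayE (M : finType) u (s : Om -> M -> R) (t : M -> A -> R) :
  is_experiment s -> is_strategy t -> mpay P u s t = G u (zz s t).
Proof.
move=> es et; rewrite /mpay; apply: inf_eqc.
  rewrite /G; case: (leP (L u pl (zz s t)) (L u ph (zz s t))) => h.
    by exists pl => //; rewrite upayE.
  by exists ph => //; rewrite upayE.
by move=> x [p Pp <-]; rewrite upayE //; apply: L_ge_G.
Qed.

Lemma G_le_mix u z nu : 0 <= nu <= 1 -> G u z <= nu * L u pl z + (1 - nu) * L u ph z.
Proof.
move=> /andP [n0 n1]; rewrite /G.
have h1 := ge_min (L u pl z) (L u pl z) (L u ph z).
have m1 : Num.min (L u pl z) (L u ph z) <= L u pl z by rewrite ge_min lexx.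
have m2 : Num.min (L u pl z) (L u ph z) <= L u ph z by rewrite ge_min lexx orbT.
set m := Num.min _ _ in m1 m2 *.
have n1' : 0 <= 1 - nu by lra.
have := ler_wpM2l n0 m1; have := ler_wpM2l n1' m2; lra.
Qed.

Lemma affc_cont (T : topologicalType) (c d : R) (F : T -> R) :
  continuous F -> continuous (fun s => c + F s * d).
Proof.
move=> Fc x; apply: (@continuousD R R^o T (fun _ => c) (fun s => F s * d) x).
  exact: cst_continuous.
apply: (@continuousM R T F (fun _ => d) x); first exact: Fc.
exact: cst_continuous.
Qed.

Variables (M : finType) (Sig : set (Om -> M -> R)) (t : M -> A -> R).
Hypothesis HS : is_amb_experiment Sig.
Variable ur : A -> Om -> R.
Hypothesis Ht : BR_amb P ur Sig t.

Lemma exp_Sig s : Sig s -> is_experiment s.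
Proof. by case: HS => _ H _ _; apply: H. Qed.

Lemma Sig0 : Sig !=set0.
Proof. by case: HS. Qed.

Lemma t_strat : is_strategy t.
Proof. by case: Ht. Qed.

Lemma t01 m : 0 <= t m a1 <= 1.
Proof.
have [h _] := t_strat m; rewrite h /=; exact: (dist_le1 _ (t_strat m)).
Qed.

Lemma zz01 s w : is_experiment s -> 0 <= zz s t w <= 1.
Proof.
move=> es; have [h1 h2] := es w; apply/andP; split.
  by apply: sumr_ge0 => m _; apply: mulr_ge0 => //; case/andP: (t01 m).
rewrite -h2; apply: ler_sum => m _; rewrite -[leRHS]mulr1; apply: ler_wpM2l => //.
by case/andP: (t01 m).
Qed.

Lemma Sig_compact : compact (Sig : set {ptws Om -> {ptws M -> R}}).
Proof.
case: HS => _ Hd Hc _.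
apply: (subclosed_compact Hc (@cube2_compact R Om M)).
move=> s /Hd es w m /=; rewrite in_itv /=; have [h _] := es w.
by rewrite h /=; apply: (dist_le1 _ (es w)).
Qed.

Lemma L_cont u p : continuous (fun s : {ptws Om -> {ptws M -> R}} => L u p (zz s t)).
Proof.
rewrite /L /zz; apply: sum_cont => w; apply: mulc_cont; apply: affc_cont.
apply: sum_cont => m; move=> x.
apply: (@continuousM R _ (fun s : {ptws Om -> {ptws M -> R}} => s w m) (fun _ => t m a1) x).
  exact: eval2_cont.
exact: cst_continuous.
Qed.

Lemma attain u p : exists2 s, Sig s & forall s', Sig s' -> L u p (zz s t) <= L u p (zz s' t).
Proof.
have S0 : (Sig : set {ptws Om -> {ptws M -> R}}) !=set0 := Sig0.
have [s Ss H] := @compact_EVT_min {ptws Om -> {ptws M -> R}} R _ Sig S0 Sig_compact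
  (continuous_subspaceT (@L_cont u p)).
exists s; first by rewrite inE in Ss.
by move=> s' Ss'; apply: H; rewrite inE.
Qed.

Definition tf (a b : R) : M -> A -> R :=
  fun m x => if x == a1 then a + b * t m a1 else 1 - (a + b * t m a1).

Lemma tf_strat a b : 0 <= a -> a <= 1 -> 0 <= a + b -> a + b <= 1 -> is_strategy (tf a b).
Proof.
move=> h1 h2 h3 h4 m.
have /andP [t0 t1] := t01 m.
have k1 : 0 <= a + b * t m a1 by nra.
have k2 : a + b * t m a1 <= 1 by nra.
split; last by rewrite (sum2 a01 aP) /tf eqxx (negbTE a01) subrK.
by move=> x; rewrite /tf; case: (x == a1); lra.
Qed.

Lemma zz_tf a b s : is_experiment s -> zz s (tf a b) = fun w => a + b * zz s t w.
Proof.
move=> es; apply: funext => w; rewrite /zz /tf eqxx.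
have [_ h] := es w.
rewrite mulr_sumr -[a in a + _]mulr1 -h mulr_sumr -big_split /=.
by apply: eq_bigr => m _; ring.
Qed.

Lemma BRlb a b c : 0 <= a -> a <= 1 -> 0 <= a + b -> a + b <= 1 ->
  (forall s, Sig s -> c <= G ur (fun w => a + b * zz s t w)) -> c <= Upay P ur Sig t.
Proof.
move=> h1 h2 h3 h4 H.
have st := tf_strat h1 h2 h3 h4.
apply: le_trans (proj2 Ht _ st).
apply: lb_le_inf.
  by case: Sig0 => s Ss; exists (mpay P ur s (tf a b)); exists s.
move=> x [s Ss <-]; rewrite mpayE //; last exact: exp_Sig.
by rewrite zz_tf; [apply: H | apply: exp_Sig].
Qed.

Lemma G_swap u z : G u z = Num.min (L u ph z) (L u pl z).
Proof. by rewrite /G minC. Qed.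

Lemma perturb (p p' : Om -> R) (m m' : R) :
  (forall z, G ur z = Num.min (L ur p z) (L ur p' z)) ->
  (forall s, Sig s -> m <= L ur p (zz s t)) ->
  (forall s, Sig s -> m' <= L ur p' (zz s t)) ->
  m < m' -> Upay P ur Sig t <= m ->
  L ur p (cst 0) <= m /\ L ur p (cst 1) <= m.
Proof.
move=> Gd Hm Hm' mm' Um.
have D0 : 0 < m' - m by rewrite subr_gt0.
split.
- rewrite leNgt; apply/negP => hL.
  have [e [e0 e1 eX]] := eps_ex (L ur p' (cst 0) - m') D0.
  set c := Num.min (e * L ur p (cst 0) + (1 - e) * m) (e * L ur p' (cst 0) + (1 - e) * m').
  have : c <= Upay P ur Sig t.
    apply: (@BRlb 0 (1 - e)); try lra.
    move=> s Ss; rewrite Gd !L_aff /c.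
    have k1 := Hm s Ss; have k2 := Hm' s Ss.
    rewrite le_min !ge_min; apply/andP; split; apply/orP.
      left; nra.
    right; nra.
  have : m < c.
    rewrite /c lt_min; apply/andP; split; nra.
  lra.
- rewrite leNgt; apply/negP => hL.
  have [e [e0 e1 eX]] := eps_ex (L ur p' (cst 1) - m') D0.
  set c := Num.min (e * L ur p (cst 1) + (1 - e) * m) (e * L ur p' (cst 1) + (1 - e) * m').
  have : c <= Upay P ur Sig t.
    apply: (@BRlb e (1 - e)); try lra.
    move=> s Ss; rewrite Gd !L_aff /c.
    have k1 := Hm s Ss; have k2 := Hm' s Ss.
    rewrite le_min !ge_min; apply/andP; split; apply/orP.
      left; nra.
    right; nra.
  have : m < c.
    rewrite /c lt_min; apply/andP; split; nra.
  lra.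
Qed.

Lemma mpayS u s : Sig s -> mpay P u s t = G u (zz s t).
Proof. by move=> Ss; rewrite mpayE //; [exact: exp_Sig | exact: t_strat]. Qed.

Lemma zz_mix (l : R) s1 s2 :
  zz (fun w m => l * s1 w m + (1 - l) * s2 w m) t = fun w => l * zz s1 t w + (1 - l) * zz s2 t w.
Proof.
apply: funext => w; rewrite /zz !mulr_sumr -big_split /=.
by apply: eq_bigr => m _; ring.
Qed.

Lemma R1 th : 0 <= th <= 1 -> G ur (cst th) <= Upay P ur Sig t.
Proof.
move=> /andP [h0 h1].
apply: (@BRlb th 0); rewrite ?addr0 //.
move=> s Ss.
have -> : (fun w => th + 0 * zz s t w) = cst th.
  by apply: funext => w; rewrite mul0r addr0.
done.
Qed.

Lemma key : exists2 s, Sig s & exists nu : R, 0 <= nu <= 1 /\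
  let z := zz s t in
  let Mn := fun y => nu * L ur pl y + (1 - nu) * L ur ph y in
  [/\ Mn z = G ur z, Mn (cst 0) <= Mn z & Mn (cst 1) <= Mn z].
Proof.
have [s1 S1 H1] := attain ur pl.
have [s2 S2 H2] := attain ur ph.
set m1 := L ur pl (zz s1 t) in H1.
set m2 := L ur ph (zz s2 t) in H2.
have Uv : Upay P ur Sig t = Num.min m1 m2.
  rewrite /Upay; apply: inf_eqc.
    case: (leP m1 m2) => h.
      exists s1 => //; rewrite mpayS //.
      by rewrite /G; apply/min_idPl; apply: le_trans h (H2 _ S1).
    exists s2 => //; rewrite mpayS //.
    by rewrite /G; apply/min_idPr; apply: le_trans (ltW h) (H1 _ S2).
  move=> x [s Ss <-]; rewrite mpayS //.
  rewrite /G le_min !ge_min.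
  by rewrite (H1 _ Ss) (H2 _ Ss) orbT.
case: (ltgtP m1 m2) => hm.
-
  have Um : Upay P ur Sig t <= m1 by rewrite Uv ge_min lexx.
  have [k0 k1] := @perturb pl ph m1 m2 (fun z => erefl) H1 H2 hm Um.
  exists s1 => //; exists 1; split; first by rewrite ler01 lexx.
  rewrite /= subrr !mul0r !addr0 !mul1r; split => //.
  by rewrite /G; apply/esym/min_idPl; apply: le_trans (ltW hm) (H2 _ S1).
- have Um : Upay P ur Sig t <= m2 by rewrite Uv ge_min lexx orbT.
  have [k0 k1] := @perturb ph pl m2 m1 (@G_swap ur) H2 H1 hm Um.
  exists s2 => //; exists 0; split; first by rewrite ler01 lexx.
  rewrite /= subr0 !mul0r !add0r !mul1r; split => //.
  by rewrite /G; apply/esym/min_idPr; apply: le_trans (ltW hm) (H1 _ S2).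
-
  have [nu [nu01 n0 n1]] : exists nu : R, [/\ 0 <= nu <= 1,
      nu * L ur pl (cst 0) + (1 - nu) * L ur ph (cst 0) <= m1 &
      nu * L ur pl (cst 1) + (1 - nu) * L ur ph (cst 1) <= m1].
    apply: oneD => th hth.
    have := R1 hth; rewrite Uv -hm minxx /G !(L_cst _ _ th); done.
  set d1 := L ur pl (zz s1 t) - L ur ph (zz s1 t).
  set d2 := L ur pl (zz s2 t) - L ur ph (zz s2 t).
  have d1le : d1 <= 0 by rewrite /d1 subr_le0 -/m1 hm; apply: H2.
  have d2ge : 0 <= d2 by rewrite /d2 subr_ge0 -/m2 -hm; apply: H1.
  pose l := if d2 - d1 == 0 then 1 else d2 / (d2 - d1).
  have l01 : 0 <= l <= 1.
    rewrite /l; case: eqP => [_|ne]; first by rewrite ler01 lexx.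
    have dp : 0 < d2 - d1 by rewrite lt_neqAle eq_sym; apply/andP; split; [apply/eqP|lra].
    apply/andP; split; first by rewrite divr_ge0 //; lra.
    by rewrite ler_pdivrMr // mul1r; lra.
  have ld : l * d1 + (1 - l) * d2 = 0.
    rewrite /l; case: eqP => [e|ne].
      have -> : d1 = 0 by lra.
      by rewrite mulr0 subrr mul0r addr0.
    have dn : d2 - d1 != 0 by apply/eqP.
    by field.
  set s := fun w m => l * s1 w m + (1 - l) * s2 w m.
  have Ss : Sig s by case: HS => _ _ _ Hc; apply: Hc.
  exists s => //; exists nu; split => //.
  set zf := fun w => l * zz s1 t w + (1 - l) * zz s2 t w.
  set ell := L ur pl zf.
  have e2 : L ur ph zf = ell.
    rewrite /ell /zf !L_mix; move: ld; rewrite /d1 /d2; lra.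
  have ellge : m1 <= ell by have := H1 _ Ss; rewrite /s zz_mix.
  rewrite /= /s zz_mix -/zf e2.
  have -> : nu * ell + (1 - nu) * ell = ell by ring.
  split.
  + by rewrite /G e2 minxx.
  + lra.
  + lra.
Qed.

Variable us : A -> Om -> R.

Lemma Upay_lb u : has_lbound [set mpay P u s t | s in Sig].
Proof.
have [s1 S1 H1] := attain u pl.
have [s2 S2 H2] := attain u ph.
exists (Num.min (L u pl (zz s1 t)) (L u ph (zz s2 t))).
move=> x [s Ss <-]; rewrite mpayS // /G le_min !ge_min.
by rewrite (H1 _ Ss) (H2 _ Ss) orbT.
Qed.

Lemma final : exists (sD : Om -> bool -> R) (tD : bool -> A -> R),
  [/\ is_experiment sD, BR_stat P ur sD tD & Upay P us Sig t <= mpay P us sD tD].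
Proof.
have [s Ss [nu [nu01 /= [K1 K2 K3]]]] := key.
set z := zz s t in K1 K2 K3.
set Mn := fun y => nu * L ur pl y + (1 - nu) * L ur ph y.
have z01 : forall w, 0 <= z w <= 1 by move=> w; apply: zz01; apply: exp_Sig.
pose sD : Om -> bool -> R := fun w b => if b then z w else 1 - z w.
pose tD : bool -> A -> R := fun b x => if x == a1 then (if b then 1 else 0) else (if b then 0 else 1).
have esD : is_experiment sD.
  move=> w; have /andP [h0 h1] := z01 w; split.
    by case; rewrite /sD //; lra.
  by rewrite big_bool /sD /=; ring.
have etD : is_strategy tD.
  move=> b; split.
    by move=> x; rewrite /tD; case: (x == a1); case: b; rewrite ?ler01 ?lexx.
  by rewrite (sum2 a01 aP) /tD eqxx (negbTE a01); case: b; rewrite ?add0r ?addr0.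
have zzg : forall t' : bool -> A -> R,
    zz sD t' = fun w => t' false a1 + (t' true a1 - t' false a1) * z w.
  move=> t'; apply: funext => w; rewrite /zz big_bool /sD /=; ring.
have zzD : zz sD tD = z.
  by rewrite zzg /tD eqxx; apply: funext => w; rewrite subr0 mul1r add0r.
exists sD, tD; split => //.
- split => // t' et'.
  rewrite !mpayE // zzD zzg.
  have /andP [h0 h1] : 0 <= t' false a1 <= 1.
    have [h _] := et' false; rewrite h /=; exact: (dist_le1 _ (et' false)).
  have /andP [h2 h3] : 0 <= t' true a1 <= 1.
    have [h _] := et' true; rewrite h /=; exact: (dist_le1 _ (et' true)).
  apply: le_trans (G_le_mix _ _ nu01) _.
  rewrite !L_aff -K1.
  set b := t' true a1 - t' false a1.
  set a := t' false a1.
  rewrite -/(Mn z) in K1 K2 K3 *.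
  have -> : nu * ((1 - a - b) * L ur pl (cst 0) + a * L ur pl (cst 1) + b * L ur pl z) +
    (1 - nu) * ((1 - a - b) * L ur ph (cst 0) + a * L ur ph (cst 1) + b * L ur ph z) =
    (1 - a - b) * Mn (cst 0) + a * Mn (cst 1) + b * Mn z by rewrite /Mn; ring.
  have k1 : 0 <= 1 - a - b by rewrite /a /b; lra.
  have k2 : 0 <= a by [].
  have := ler_wpM2l k1 K2; have := ler_wpM2l k2 K3.
  set X := Mn z; rewrite /Mn /=; lra.
- have -> : mpay P us sD tD = G us z by rewrite mpayE // zzD.
  rewrite -mpayS //.
  by apply: ge_inf; [exact: Upay_lb | exists s].
Qed.
End Main.
Lemma prior_extremes (R : realType) (Om : finType) (P : set (Om -> R)) (w1 : Om) :
  is_prior_set P ->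
  exists pl ph, [/\ P pl, P ph, (forall p, P p -> pl w1 <= p w1) &
                    (forall p, P p -> p w1 <= ph w1)].
Proof.
case=> P0 Pd Pc _.
have cP : compact (P : set {ptws Om -> R}).
  apply: (subclosed_compact Pc (@cube_compact R Om)).
  move=> p /Pd dp w /=; rewrite in_itv /=; have [h _] := dp.
  by rewrite h /=; apply: (dist_le1 _ dp).
have P0' : (P : set {ptws Om -> R}) !=set0 := P0.
have cf := continuous_subspaceT (A := (P : set {ptws Om -> R})) (@eval_cont R Om w1).
have [pl Pl Hl] := @compact_EVT_min {ptws Om -> R} R _ P P0' cP cf.
have [ph Ph Hh] := @compact_EVT_max {ptws Om -> R} R _ P P0' cP cf.
exists pl, ph; split; first by rewrite inE in Pl.
- by rewrite inE in Ph.
- by move=> p Pp; apply: Hl; rewrite inE.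
- by move=> p Pp; apply: Hh; rewrite inE.
Qed.

Theorem theorem1 (R : realType) (Om A : finType) (P : set (Om -> R))
    (us ur : A -> Om -> R) :
  #|Om| = 2%N -> #|A| = 2%N -> is_prior_set P ->
  (V_amb P us ur <= V_stat P us ur)%E.
Proof.
move=> cO cA HP.
have [w0 [w1 [w01 wP]]] := card2P cO.
have [a0 [a1 [a01 aP]]] := card2P cA.
have [pl [ph [Ppl Pph plmin phmax]]] := prior_extremes w1 HP.
apply: ge_ereal_sup => x [M [Sig [t [HS Ht ->]]]].
have [sD [tD [esD brD le]]] := final w01 wP a01 aP HP Ppl Pph plmin phmax HS Ht us.
apply: (le_trans (y := (mpay P us sD tD)%:E)); first by rewrite lee_fin.
by apply: ereal_sup_ubound; exists bool, sD, tD.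
Qed.
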